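(* $\mathcal A/\mathcal A_1\cong\mathbb Z_2$, and for all integers $n\ge1$, $$\mathcal A_{2n-1}/\mathcal A_{2n+1}\cong\mathbb Z_2\times\mathbb Z_2.$$
   Context: Over $\mathbb F_2$, the Appell subgroup $\mathcal A$ of the Riordan group is the abelian group of Riordan arrays $(g,t)$ with $g\in\mathbb F_2[[t]]$, $g(0)=1$, with product $(g_1,t)(g_2,t)=(g_1g_2,t)$. For $n\ge0$, $\mathcal A_n=\{(g,t)\in\mathcal A: g\equiv 1\pmod{t^{n+1}}\}$, i.e. $g=1+\alpha_{n+1}t^{n+1}+\alpha_{n+2}t^{n+2}+\cdots$. $\mathbb Z_2=\mathbb Z/2\mathbb Z$. *)

(* Defs.v *)
From mathcomp Require Import all_boot all_algebra.
Set Implicit Arguments. Unset Strict Implicit. Unset Printing Implicit Defensive.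
Import GRing.Theory.
Local Open Scope ring_scope.

Definition series := nat -> 'F_2.

Definition smul (a b : series) : series :=
  fun m => \sum_(i < m.+1) a i * b (m - i)%N.

(* Membership of the Riordan array (g,t) in A_n: g = 1 mod t^(n+1),
   i.e. g 0 = 1 and g i = 0 for 1 <= i <= n.  A = A_0. *)
Definition inA (n : nat) (g : series) : Prop :=
  g 0%N = 1 /\ forall i : nat, (1 <= i <= n)%N -> g i = 0.

(* P / Q is isomorphic to the abelian group Z (Q a subgroup of P):
   there is a group homomorphism f from P onto Z whose fibres are exactly
   the cosets h Q, i.e. f induces an isomorphism P/Q ~= Z. *)
Definition quotient_iso (P Q : series -> Prop) (Z : zmodType) : Prop :=
  exists f : series -> Z,
    [/\ (forall g h, P g -> P h -> f (smul g h) = f g + f h),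
        (forall z : Z, exists g, P g /\ f g = z)
      & (forall g h, P g -> P h ->
           (f g = f h <-> exists k, Q k /\ forall m, g m = smul h k m))].

(* Main.v *)
Require Import Defs.
From mathcomp Require Import all_boot all_algebra.
From mathcomp Require Import zify.
Import GRing.Theory.
Local Open Scope ring_scope.

Definition toZ (x : 'F_2) : 'Z_2 := x.
Definition ofZ (x : 'Z_2) : 'F_2 := x.

Fixpoint kf (h g : series) (fuel m : nat) : 'F_2 :=
  match fuel with
  | 0%N => 0
  | f.+1 => g m - \sum_(i < m) h i.+1 * kf h g f (m - i.+1)%N
  end.

Lemma kf_stable h g : forall b fuel m, (fuel <= b)%N -> (m < fuel)%N ->
  kf h g fuel m = kf h g m.+1 m.
Proof.
elim=> [|b IH] [|f] m //= Hb Hm.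
congr (_ - _); apply: eq_bigr => i _; congr (_ * _).
have Hi := ltn_ord i.
rewrite (IH f) ?(IH m) //; lia.
Qed.

Lemma solve h g : h 0%N = 1 -> exists k, forall m, g m = smul h k m.
Proof.
move=> h0; exists (fun m => kf h g m.+1 m) => m.
rewrite /smul big_ord_recl /= h0 mul1r subn0 /=.
have -> : \sum_(i < m) h (bump 0 i) * kf h g (m - bump 0 i).+1 (m - bump 0 i)%N
        = \sum_(i < m) h i.+1 * kf h g m (m - i.+1)%N.
  apply: eq_bigr => i _; rewrite /bump /=; congr (_ * _).
  have Hi := ltn_ord i; rewrite add1n (@kf_stable h g m) //; lia.
by rewrite subrK.
Qed.

Lemma hom N g h m : inA N g -> inA N h -> (1 <= m <= N.*2.+1)%N ->
  smul g h m = g m + h m.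
Proof.
move=> [g0 gN] [h0 hN] Hm; case: m Hm => [//|m] Hm.
rewrite /smul big_ord_recr /= big_ord_recl /= subn0 subnn g0 h0 mul1r mulr1.
rewrite big1; first by rewrite addr0 addrC.
move=> i _; rewrite /bump /=.
case: (leqP i.+1 N) => Hi.
  by rewrite gN ?mul0r //; lia.
rewrite hN ?mulr0 //; have := ltn_ord i; lia.
Qed.

Lemma conv M h k j : inA M k -> (j <= M)%N -> smul h k j = h j.
Proof.
move=> [k0 kM] Hj; rewrite /smul big_ord_recr /= subnn k0 mulr1.
rewrite big1 ?add0r // => i _; rewrite kM ?mulr0 //; have := ltn_ord i; lia.
Qed.

Lemma fib M g h k : h 0%N = 1 -> g 0%N = 1 -> (forall m, g m = smul h k m) ->
  (forall j, (1 <= j <= M)%N -> g j = h j) -> inA M k.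
Proof.
move=> h0 g0 E Hj.
have k0 : k 0%N = 1 by rewrite -g0 E /smul big_ord1 h0 mul1r.
split=> //.
suff: forall b j, (1 <= j <= b)%N -> (j <= M)%N -> k j = 0.
  by move=> H i Hi; apply: (H i); lia.
elim=> [|b IH] j Hb HM; first by lia.
case: j Hb HM => [//|j] Hb HM.
have := Hj j.+1 ltac:(lia); rewrite E /smul big_ord_recl /= h0 mul1r subn0.
rewrite big_ord_recr /= subnn k0 mulr1 big1 ?add0r.
  by move=> H; apply: (addIr (h j.+1)); rewrite add0r.
move=> i _; rewrite /bump /= (IH) ?mulr0 //; have := ltn_ord i; lia.
Qed.

Lemma part1 : quotient_iso (inA 0) (inA 1) 'Z_2.
Proof.
exists (fun g : series => toZ (g 1%N)); split.
- move=> g h Hg Hh; rewrite (hom _ _ _ 1%N Hg Hh) //.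
- move=> z; exists (fun i => if i == 0%N then 1 else if i == 1%N then ofZ z else 0).
  by split=> //; split=> // i; lia.
- move=> g h Hg Hh; split.
  + move=> E; have [k Ek] := solve h g (proj1 Hh).
    exists k; split=> //; apply: (fib _ _ _ _ (proj1 Hh) (proj1 Hg) Ek).
    move=> j Hj; have -> : j = 1%N by lia. exact: E.
  + move=> [k [Hk E]]; rewrite /toZ E (conv _ _ _ _ Hk) //.
Qed.

Lemma part2 n : (1 <= n)%N ->
  quotient_iso (inA (2 * n - 1)) (inA (2 * n + 1)) ('Z_2 * 'Z_2)%type.
Proof.
move=> Hn.
exists (fun g : series => (toZ (g (2 * n)%N), toZ (g (2 * n + 1)%N))); split.
- move=> g h Hg Hh; rewrite (hom _ _ _ (2 * n)%N Hg Hh) ?(hom _ _ _ (2 * n + 1)%N Hg Hh) //; lia.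
- move=> [a b]; exists (fun i => if i == 0%N then 1 else
     if i == (2 * n)%N then ofZ a else if i == (2 * n + 1)%N then ofZ b else 0).
  split; last first.
    have E1 : (2 * n + 1 == 2 * n)%N = false by lia.
    have E2 : (2 * n == 0)%N = false by lia.
    have E3 : (2 * n + 1 == 0)%N = false by lia.
    by rewrite /= E1 E2 E3 !eqxx.
  split=> // i Hi; have -> : (i == 0)%N = false by lia.
  have -> : (i == 2 * n)%N = false by lia.
  by have -> : (i == 2 * n + 1)%N = false by lia.
- move=> g h Hg Hh; split.
  + move=> [E1 E2]; have [k Ek] := solve h g (proj1 Hh).
    exists k; split=> //; apply: (fib _ _ _ _ (proj1 Hh) (proj1 Hg) Ek).
    move=> j Hj; case: (leqP j (2 * n - 1)) => Hj'.
      by rewrite (proj2 Hg) ?(proj2 Hh) //; lia.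
    case: (ltnP j (2 * n + 1)) => Hj2.
      by have -> : j = (2 * n)%N by lia.
    by have -> : j = (2 * n + 1)%N by lia.
  + move=> [k [Hk E]]; rewrite /toZ !E !(conv _ _ _ _ Hk) //; lia.
Qed.

Theorem corollary6 :
  quotient_iso (inA 0) (inA 1) 'Z_2 /\
  (forall n : nat, (1 <= n)%N ->
     quotient_iso (inA (2 * n - 1)) (inA (2 * n + 1)) ('Z_2 * 'Z_2)%type).
Proof. split; [exact: part1 | exact: part2]. Qed.
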